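(* Let $X$ and $Y$ be sup-lattices. Then $(X,Y)$ is a Morita pair between some m-regular quantales (i.e. there exist m-regular quantales $A$, $B$ and pairings making $(A,B,X,Y,(-,-),[-,-])$ a Morita context) if and only if there exist surjective sup-preserving maps $p: X\otimes Y\otimes X\to X$ and $q: Y\otimes X\otimes Y\to Y$ such that, for all $x_1,x_2,x_3\in X$ and $y_1,y_2,y_3\in Y$: 1. $p(p(x_1\otimes y_1\otimes x_2)\otimes y_2\otimes x_3)=p(x_1\otimes q(y_1\otimes x_2\otimes y_2)\otimes x_3)=p(x_1\otimes y_1\otimes p(x_2\otimes y_2\otimes x_3))$; 2. $q(q(y_1\otimes x_1\otimes y_2)\otimes x_2\otimes y_3)=q(y_1\otimes p(x_1\otimes y_2\otimes x_2)\otimes y_3)=q(y_1\otimes x_1\otimes q(y_2\otimes x_2\otimes y_3))$; 3. if $p(u\otimes v\otimes x_1)=p(u\otimes v\otimes x_2)$ for all $u\in X$, $v\in Y$, then $x_1=x_2$; 4. if $p(x_1\otimes v\otimes u)=p(x_2\otimes v\otimes u)$ for all $u\in X$, $v\in Y$, then $x_1=x_2$; 5. if $q(v\otimes u\otimes y_1)=q(v\otimes u\otimes y_2)$ for all $v\in Y$, $u\in X$, then $y_1=y_2$; 6. if $q(y_1\otimes u\otimes v)=q(y_2\otimes u\otimes v)$ for all $u\in X$, $v\in Y$, then $y_1=y_2$.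
   Context: A sup-lattice is a complete lattice; sup-preserving maps preserve arbitrary joins. $\otimes$ denotes the tensor product in the category of sup-lattices (the universal sup-lattice for maps preserving arbitrary joins in each variable separately; it is join-generated by the elementary tensors). A quantale is a sup-lattice $A$ with an associative multiplication distributing over arbitrary joins on both sides. A right $A$-module is a sup-lattice $M$ with an action $M\times A\to M$ satisfying $m\cdot(a\cdot b)=(m\cdot a)\cdot b$ and preserving arbitrary joins in each variable; left modules are defined dually. A right $A$-module $M$ is essential if every element of $M$ is a join of elements $m\cdot a$, separated if ($m\cdot a=n\cdot a$ for all $a\in A$) implies $m=n$, and m-regular if it is both essential and separated; dually for left modules. An (m-regular) $A,B$-bimodule is a sup-lattice that is an (m-regular) left $A$-module and an (m-regular) right $B$-module with commuting actions. A quantale $A$ is m-regular if it is m-regular as an $A,A$-bimodule over itself. A Morita context between m-regular quantales $A$ and $B$ is a 6-tuple $(A,B,X,Y,(-,-),[-,-])$ where $X$ is an m-regular $A,B$-bimodule, $Y$ is an m-regular $B,A$-bimodule, and $(-,-):X\times Y\to A$, $[-,-]:Y\times X\to B$ are bimodule maps (preserving joins in each variable and compatible with the outer actions) satisfying $(x\cdot b,y)=(x,b\cdot y)$, $[y\cdot a,x]=[y,a\cdot x]$, $(x_1,y)\cdot x_2=x_1\cdot[y,x_2]$, $[y_1,x]\cdot y_2=y_1\cdot(x,y_2)$ for all $x,x_i\in X$, $y,y_i\in Y$, $a\in A$, $b\in B$, and such that the induced sup-preserving maps $X\otimes Y\to A$ and $Y\otimes X\to B$ are surjective. The pair $(X,Y)$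 is then called a Morita pair. *)

(* Defs.v *)
Record SupLattice := {
  sl_car :> Type;
  sl_le : sl_car -> sl_car -> Prop;
  sl_refl : forall x, sl_le x x;
  sl_trans : forall x y z, sl_le x y -> sl_le y z -> sl_le x z;
  sl_antisym : forall x y, sl_le x y -> sl_le y x -> x = y;
  sl_sup : (sl_car -> Prop) -> sl_car;
  sl_sup_ub : forall (S : sl_car -> Prop) x, S x -> sl_le x (sl_sup S);
  sl_sup_least : forall (S : sl_car -> Prop) z,
      (forall x, S x -> sl_le x z) -> sl_le (sl_sup S) z }.

Arguments sl_le {s} _ _.
Arguments sl_sup {s} _.

Definition img {A B : Type} (f : A -> B) (S : A -> Prop) : B -> Prop :=
  fun b => exists a, S a /\ b = f a.

Definition surj {A B : Type} (f : A -> B) : Prop := forall b, exists a, f a = b.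

Definition sup_pres {X Y : SupLattice} (f : X -> Y) : Prop :=
  forall S : X -> Prop, f (sl_sup S) = sl_sup (img f S).

Definition bimorph {X Y Z : SupLattice} (g : X -> Y -> Z) : Prop :=
  (forall y, sup_pres (fun x => g x y)) /\ (forall x, sup_pres (g x)).

Definition trimorph {X Y W Z : SupLattice} (g : X -> Y -> W -> Z) : Prop :=
  (forall y w, sup_pres (fun x => g x y w)) /\
  (forall x w, sup_pres (fun y => g x y w)) /\
  (forall x y, sup_pres (g x y)).

(* (T, t) is a tensor product X (x) Y in the category of sup-lattices:
   t x y = x (x) y, and t is the universal bimorphism. *)
Definition is_tensor2 (X Y T : SupLattice) (t : X -> Y -> T) : Prop :=
  bimorph t /\
  forall (Z : SupLattice) (g : X -> Y -> Z), bimorph g ->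
    exists h : T -> Z, sup_pres h /\ (forall x y, h (t x y) = g x y) /\
      forall h' : T -> Z, sup_pres h' -> (forall x y, h' (t x y) = g x y) ->
        forall u, h' u = h u.

(* (T, t) is a threefold tensor product X (x) Y (x) W: t x y w = x (x) y (x) w,
   universal among maps preserving joins in each variable. *)
Definition is_tensor3 (X Y W T : SupLattice) (t : X -> Y -> W -> T) : Prop :=
  trimorph t /\
  forall (Z : SupLattice) (g : X -> Y -> W -> Z), trimorph g ->
    exists h : T -> Z, sup_pres h /\ (forall x y w, h (t x y w) = g x y w) /\
      forall h' : T -> Z, sup_pres h' -> (forall x y w, h' (t x y w) = g x y w) ->
        forall u, h' u = h u.

Record Quantale := {
  q_sl :> SupLattice;
  q_mul : q_sl -> q_sl -> q_sl;
  q_assoc : forall a b c, q_mul a (q_mul b c) = q_mul (q_mul a b) c;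
  q_bimorph : bimorph q_mul }.

Arguments q_mul {q} _ _.

Definition is_rmod (A : Quantale) (M : SupLattice) (act : M -> A -> M) : Prop :=
  (forall m (a b : A), act m (q_mul a b) = act (act m a) b) /\ bimorph act.

Definition is_lmod (A : Quantale) (M : SupLattice) (act : A -> M -> M) : Prop :=
  (forall (a b : A) m, act (q_mul a b) m = act a (act b m)) /\ bimorph act.

Definition r_essential (A : Quantale) (M : SupLattice) (act : M -> A -> M) : Prop :=
  forall m : M, exists S : M -> Prop,
    (forall z, S z -> exists (n : M) (a : A), z = act n a) /\ m = sl_sup S.

Definition l_essential (A : Quantale) (M : SupLattice) (act : A -> M -> M) : Prop :=
  forall m : M, exists S : M -> Prop,
    (forall z, S z -> exists (a : A) (n : M), z = act a n) /\ m = sl_sup S.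

Definition r_separated (A : Quantale) (M : SupLattice) (act : M -> A -> M) : Prop :=
  forall m n : M, (forall a : A, act m a = act n a) -> m = n.

Definition l_separated (A : Quantale) (M : SupLattice) (act : A -> M -> M) : Prop :=
  forall m n : M, (forall a : A, act a m = act a n) -> m = n.

Definition mreg_rmod (A : Quantale) (M : SupLattice) (act : M -> A -> M) : Prop :=
  is_rmod A M act /\ r_essential A M act /\ r_separated A M act.

Definition mreg_lmod (A : Quantale) (M : SupLattice) (act : A -> M -> M) : Prop :=
  is_lmod A M act /\ l_essential A M act /\ l_separated A M act.

Definition mreg_bimod (A B : Quantale) (M : SupLattice)
    (la : A -> M -> M) (ra : M -> B -> M) : Prop :=
  mreg_lmod A M la /\ mreg_rmod B M ra /\
  (forall (a : A) (m : M) (b : B), ra (la a m) b = la a (ra m b)).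

Definition mreg_quantale (A : Quantale) : Prop :=
  mreg_bimod A A A (@q_mul A) (@q_mul A).

(* Morita context (A,B,X,Y,(-,-),[-,-]); the tensor products X (x) Y and
   Y (x) X are given by (TXY, t2) and (TYX, s2). *)
Definition morita_context (A B : Quantale) (X Y : SupLattice)
    (laX : A -> X -> X) (raX : X -> B -> X)
    (laY : B -> Y -> Y) (raY : Y -> A -> Y)
    (pr : X -> Y -> A) (br : Y -> X -> B)
    (TXY : SupLattice) (t2 : X -> Y -> TXY)
    (TYX : SupLattice) (s2 : Y -> X -> TYX) : Prop :=
  mreg_quantale A /\ mreg_quantale B /\
  mreg_bimod A B X laX raX /\ mreg_bimod B A Y laY raY /\
  bimorph pr /\ bimorph br /\
  (forall a x y, pr (laX a x) y = q_mul a (pr x y)) /\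
  (forall x y a, pr x (raY y a) = q_mul (pr x y) a) /\
  (forall b y x, br (laY b y) x = q_mul b (br y x)) /\
  (forall y x b, br y (raX x b) = q_mul (br y x) b) /\
  (forall x b y, pr (raX x b) y = pr x (laY b y)) /\
  (forall y a x, br (raY y a) x = br y (laX a x)) /\
  (forall x1 y x2, laX (pr x1 y) x2 = raX x1 (br y x2)) /\
  (forall y1 x y2, laY (br y1 x) y2 = raY y1 (pr x y2)) /\
  (exists h : TXY -> A, sup_pres h /\ (forall x y, h (t2 x y) = pr x y) /\ surj h) /\
  (exists h : TYX -> B, sup_pres h /\ (forall y x, h (s2 y x) = br y x) /\ surj h).

Definition morita_pair (X Y : SupLattice)
    (TXY : SupLattice) (t2 : X -> Y -> TXY)
    (TYX : SupLattice) (s2 : Y -> X -> TYX) : Prop :=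
  exists (A B : Quantale)
         (laX : A -> X -> X) (raX : X -> B -> X)
         (laY : B -> Y -> Y) (raY : Y -> A -> Y)
         (pr : X -> Y -> A) (br : Y -> X -> B),
    morita_context A B X Y laX raX laY raY pr br TXY t2 TYX s2.

(* Main.v *)
Require Import Defs.
From Stdlib Require Import ProofIrrelevance FunctionalExtensionality Setoid.

Section Lat.
Context {L : SupLattice}.
Implicit Types x y z : L.

Lemma le_refl x : sl_le x x. Proof. apply sl_refl. Qed.
Lemma le_trans x y z : sl_le x y -> sl_le y z -> sl_le x z. Proof. apply sl_trans. Qed.
Lemma antisym x y : sl_le x y -> sl_le y x -> x = y. Proof. apply sl_antisym. Qed.
Lemma sup_ub (S : L -> Prop) x : S x -> sl_le x (sl_sup S). Proof. apply sl_sup_ub. Qed.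
Lemma sup_least (S : L -> Prop) z : (forall x, S x -> sl_le x z) -> sl_le (sl_sup S) z.
Proof. apply sl_sup_least. Qed.

Lemma sup_mono (S S' : L -> Prop) : (forall z, S z -> S' z) -> sl_le (sl_sup S) (sl_sup S').
Proof. intros H; apply sup_least; intros; apply sup_ub; auto. Qed.

Lemma sup_ext (S S' : L -> Prop) : (forall z, S z <-> S' z) -> sl_sup S = sl_sup S'.
Proof. intros H; apply antisym; apply sup_mono; firstorder. Qed.

Lemma img_ub {I} (f : I -> L) S i : S i -> sl_le (f i) (sl_sup (img f S)).
Proof. intros; apply sup_ub; exists i; auto. Qed.

Lemma img_least {I} (f : I -> L) S z : (forall i, S i -> sl_le (f i) z) -> sl_le (sl_sup (img f S)) z.
Proof. intros H; apply sup_least; intros w [i [Hi ->]]; auto. Qed.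

Lemma sup_img_le {I} (f g : I -> L) S : (forall i, S i -> sl_le (f i) (g i)) ->
  sl_le (sl_sup (img f S)) (sl_sup (img g S)).
Proof. intros H; apply img_least; intros i Hi; eapply le_trans; [apply H; auto|]; apply img_ub; auto. Qed.

Lemma sup_img_ext {I} (f g : I -> L) S : (forall i, S i -> f i = g i) ->
  sl_sup (img f S) = sl_sup (img g S).
Proof. intros H; apply antisym; apply sup_img_le; intros i Hi; rewrite H; auto; apply le_refl. Qed.

Lemma sup_comm {I J} (F : I -> J -> L) S T :
  sl_sup (img (fun i => sl_sup (img (F i) T)) S) =
  sl_sup (img (fun j => sl_sup (img (fun i => F i j) S)) T).
Proof.
  apply antisym; apply img_least; intros i Hi; apply img_least; intros j Hj.
  - eapply le_trans; [|apply img_ub; eauto]; apply (img_ub (fun i => F i j)); auto.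
  - eapply le_trans; [|apply img_ub; eauto]; apply (img_ub (F j)); auto.
Qed.

Lemma sup_img_id (S : L -> Prop) : sl_sup (img (fun x => x) S) = sl_sup S.
Proof. apply sup_ext; intros z; split; [intros [a [Ha ->]]; auto | intros; exists z; auto]. Qed.

Lemma sup_single x : sl_sup (fun z => z = x) = x.
Proof. apply antisym; [apply sup_least; intros; subst; apply le_refl| apply sup_ub; auto]. Qed.

End Lat.

Lemma sp_img {L1 L2 : SupLattice} {I} (f : L1 -> L2) (g : I -> L1) S :
  sup_pres f -> f (sl_sup (img g S)) = sl_sup (img (fun i => f (g i)) S).
Proof.
  intros H; rewrite H; apply sup_ext; intros z; split.
  - intros [a [[i [Hi ->]] ->]]; exists i; auto.
  - intros [i [Hi ->]]; exists (g i); split; auto; exists i; auto.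
Qed.

Lemma sp_mono {L1 L2 : SupLattice} (f : L1 -> L2) x y :
  sup_pres f -> sl_le x y -> sl_le (f x) (f y).
Proof.
  intros H Hxy.
  assert (E : y = sl_sup (fun z => z = x \/ z = y)).
  { apply antisym; [apply sup_ub; auto| apply sup_least; intros z [->| ->]; auto using le_refl]. }
  rewrite E, H. apply sup_ub. exists x; split; auto.
Qed.

Lemma sp_id {L1 : SupLattice} : sup_pres (fun x : L1 => x).
Proof. intros S; symmetry; apply sup_img_id. Qed.

Lemma sig_eq {A} {P : A -> Prop} (a b : {x | P x}) : proj1_sig a = proj1_sig b -> a = b.
Proof. destruct a, b; simpl; intros ->; f_equal; apply proof_irrelevance. Qed.

Section Sub.
Context (L : SupLattice) (G : L -> Prop)
  (HG : forall F : L -> Prop, (forall x, F x -> G x) -> G (sl_sup F)).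

Definition sub_sup (F : {x | G x} -> Prop) : {x | G x}.
Proof.
  exists (sl_sup (img (@proj1_sig _ _) F)). apply HG. intros x [a [_ ->]]. apply proj2_sig.
Defined.

Definition subSL : SupLattice.
Proof.
  refine {| sl_car := {x | G x}; sl_le := fun a b => sl_le (proj1_sig a) (proj1_sig b);
            sl_sup := sub_sup |}.
  - intros; apply le_refl.
  - intros; eapply le_trans; eauto.
  - intros; apply sig_eq; apply antisym; auto.
  - intros S x Hx; simpl; apply (img_ub (@proj1_sig _ _)); auto.
  - intros S z Hz; simpl; apply img_least; auto.
Defined.
End Sub.

Definition elem3 {X Y W T : SupLattice} (t : X -> Y -> W -> T) (k : X * Y * W) : T :=
  t (fst (fst k)) (snd (fst k)) (snd k).

Lemma gen3 X Y W T t : is_tensor3 X Y W T t ->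
  forall u, u = sl_sup (img (elem3 t) (fun k => sl_le (elem3 t k) u)).
Proof.
  intros [Htri Huniv].
  set (G := fun u : T => u = sl_sup (img (elem3 t) (fun k => sl_le (elem3 t k) u))).
  assert (HG : forall F : T -> Prop, (forall x, F x -> G x) -> G (sl_sup F)).
  { intros F HF. unfold G. apply antisym.
    - apply sup_least. intros x Fx. pose proof (HF x Fx) as Ex. unfold G in Ex.
      apply le_trans with (y := sl_sup (img (elem3 t) (fun k => sl_le (elem3 t k) x))).
      + rewrite <- Ex; apply le_refl.
      + apply img_least; intros k Hk. apply img_ub. eapply le_trans; [exact Hk|]. apply sup_ub; auto.
    - apply img_least; auto. }
  assert (Gt : forall x y w, G (t x y w)).
  { intros x y w; unfold G; apply antisym.
    - apply (img_ub (elem3 t) _ (x, y, w)); apply le_refl.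
    - apply img_least; auto. }
  set (T' := subSL T G HG).
  set (t' := fun x y w => (exist G (t x y w) (Gt x y w) : T')).
  assert (Htri' : trimorph t').
  { destruct Htri as [H1 [H2 H3]].
    split; [|split]; intros a b S; apply sig_eq; simpl;
      [rewrite H1|rewrite H2|rewrite H3]; apply sup_ext; intros z; split;
      (first [intros [c [[i [Hi ->]] ->]]; exists i; auto
             |intros [i [Hi ->]]; eexists; split; [exists i; split; [exact Hi|reflexivity]|reflexivity]]). }
  destruct (Huniv T' t' Htri') as [h [hsp [ht _]]].
  set (k := fun u => proj1_sig (h u)).
  assert (ksp : sup_pres k).
  { intros S. unfold k. rewrite hsp. simpl. apply sup_ext; intros z; split.
    - intros [a [[b [Hb ->]] ->]]; exists b; auto.
    - intros [b [Hb ->]]; exists (h b); split; auto; exists b; auto. }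
  destruct (Huniv T t Htri) as [h0 [_ [_ h0u]]].
  intros u.
  assert (E : k u = u).
  { rewrite (h0u k ksp), (h0u (fun v => v) sp_id); auto.
    intros; unfold k; rewrite ht; reflexivity. }
  pose proof (proj2_sig (h u)) as Hg. change (G (k u)) in Hg. rewrite E in Hg. exact Hg.
Qed.

Definition elem2 {X Y T : SupLattice} (t : X -> Y -> T) (k : X * Y) : T :=
  t (fst k) (snd k).

Lemma gen2 X Y T t : is_tensor2 X Y T t ->
  forall u, u = sl_sup (img (elem2 t) (fun k => sl_le (elem2 t k) u)).
Proof.
  intros [Htri Huniv].
  set (G := fun u : T => u = sl_sup (img (elem2 t) (fun k => sl_le (elem2 t k) u))).
  assert (HG : forall F : T -> Prop, (forall x, F x -> G x) -> G (sl_sup F)).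
  { intros F HF. unfold G. apply antisym.
    - apply sup_least. intros x Fx. pose proof (HF x Fx) as Ex. unfold G in Ex.
      apply le_trans with (y := sl_sup (img (elem2 t) (fun k => sl_le (elem2 t k) x))).
      + rewrite <- Ex; apply le_refl.
      + apply img_least; intros k Hk. apply img_ub. eapply le_trans; [exact Hk|]. apply sup_ub; auto.
    - apply img_least; auto. }
  assert (Gt : forall x y, G (t x y)).
  { intros x y; unfold G; apply antisym.
    - apply (img_ub (elem2 t) _ (x, y)); apply le_refl.
    - apply img_least; auto. }
  set (T' := subSL T G HG).
  set (t' := fun x y => (exist G (t x y) (Gt x y) : T')).
  assert (Htri' : bimorph t').
  { destruct Htri as [H1 H2].
    split; intros a S; apply sig_eq; simpl;
      [rewrite H1|rewrite H2]; apply sup_ext; intros z; split;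
      (first [intros [c [[i [Hi ->]] ->]]; exists i; auto
             |intros [i [Hi ->]]; eexists; split; [exists i; split; [exact Hi|reflexivity]|reflexivity]]). }
  destruct (Huniv T' t' Htri') as [h [hsp [ht _]]].
  set (k := fun u => proj1_sig (h u)).
  assert (ksp : sup_pres k).
  { intros S. unfold k. rewrite hsp. simpl. apply sup_ext; intros z; split.
    - intros [a [[b [Hb ->]] ->]]; exists b; auto.
    - intros [b [Hb ->]]; exists (h b); split; auto; exists b; auto. }
  destruct (Huniv T t Htri) as [h0 [_ [_ h0u]]].
  intros u.
  assert (E : k u = u).
  { rewrite (h0u k ksp), (h0u (fun v => v) sp_id); auto.
    intros; unfold k; rewrite ht; reflexivity. }
  pose proof (proj2_sig (h u)) as Hg. change (G (k u)) in Hg. rewrite E in Hg. exact Hg.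
Qed.

Lemma gen_sp3 (X Y W T : SupLattice) (t : X -> Y -> W -> T) (L : SupLattice) (f : T -> L) : is_tensor3 X Y W T t -> sup_pres f ->
  forall u, f u = sl_sup (img (fun k => f (elem3 t k)) (fun k => sl_le (elem3 t k) u)).
Proof.
  intros Ht Hf u. transitivity (f (sl_sup (img (elem3 t) (fun k => sl_le (elem3 t k) u)))).
  - f_equal. apply gen3; auto.
  - apply sp_img; auto.
Qed.

Lemma gen_sp2 (X Y T : SupLattice) (t : X -> Y -> T) (L : SupLattice) (f : T -> L) : is_tensor2 X Y T t -> sup_pres f ->
  forall u, f u = sl_sup (img (fun k => f (elem2 t k)) (fun k => sl_le (elem2 t k) u)).
Proof.
  intros Ht Hf u. transitivity (f (sl_sup (img (elem2 t) (fun k => sl_le (elem2 t k) u)))).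
  - f_equal. apply gen2; auto.
  - apply sp_img; auto.
Qed.

Lemma gen_surj3 (X Y W T : SupLattice) (t : X -> Y -> W -> T) (L : SupLattice) (p : T -> L) : is_tensor3 X Y W T t -> sup_pres p ->
  surj p -> forall x, exists K, x = sl_sup (img (fun k => p (elem3 t k)) K).
Proof.
  intros Ht Hp Hs x. destruct (Hs x) as [u <-]. eexists. apply gen_sp3; auto.
Qed.

Lemma gen_surj2 (X Y T : SupLattice) (t : X -> Y -> T) (L : SupLattice) (p : T -> L) : is_tensor2 X Y T t -> sup_pres p ->
  surj p -> forall x, exists K, x = sl_sup (img (fun k => p (elem2 t k)) K).
Proof.
  intros Ht Hp Hs x. destruct (Hs x) as [u <-]. eexists. apply gen_sp2; auto.
Qed.

Section Fwd.
Context (A B : Quantale) (X Y : SupLattice)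
  (laX : A -> X -> X) (raX : X -> B -> X) (pr : X -> Y -> A) (br : Y -> X -> B)
  (TXY : SupLattice) (t2 : X -> Y -> TXY) (HXY : is_tensor2 X Y TXY t2)
  (TYX : SupLattice) (s2 : Y -> X -> TYX) (HYX : is_tensor2 Y X TYX s2)
  (TXYX : SupLattice) (t3 : X -> Y -> X -> TXYX) (HXYX : is_tensor3 X Y X TXYX t3)
  (HlaX : bimorph laX) (HraX : bimorph raX) (Hpr : bimorph pr)
  (Hless : l_essential A X laX) (Hlsep : l_separated A X laX) (Hrsep : r_separated B X raX)
  (Hid : forall x1 y x2, laX (pr x1 y) x2 = raX x1 (br y x2))
  (hA : TXY -> A) (hAsp : sup_pres hA) (hAt : forall x y, hA (t2 x y) = pr x y) (hAs : surj hA)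
  (hB : TYX -> B) (hBsp : sup_pres hB) (hBt : forall y x, hB (s2 y x) = br y x) (hBs : surj hB).

Lemma fwd_la a n : exists K, laX a n = sl_sup (img (fun k => laX (pr (fst k) (snd k)) n) K).
Proof.
  destruct (gen_surj2 _ _ _ _ _ hA HXY hAsp hAs a) as [K ->]. exists K.
  rewrite (sp_img (fun a => laX a n)); [|apply (proj1 HlaX)].
  apply sup_img_ext; intros; unfold elem2; rewrite hAt; auto.
Qed.

Lemma fwd_ra x b : exists K, raX x b = sl_sup (img (fun k => raX x (br (fst k) (snd k))) K).
Proof.
  destruct (gen_surj2 _ _ _ _ _ hB HYX hBsp hBs b) as [K ->]. exists K.
  rewrite (sp_img (raX x)); [|apply (proj2 HraX)].
  apply sup_img_ext; intros; unfold elem2; rewrite hBt; auto.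
Qed.

Lemma fwd_main : exists p : TXYX -> X, sup_pres p /\ surj p /\
  (forall x y z, p (t3 x y z) = laX (pr x y) z) /\
  (forall x1 x2 : X, (forall (u : X) (v : Y), p (t3 u v x1) = p (t3 u v x2)) -> x1 = x2) /\
  (forall x1 x2 : X, (forall (u : X) (v : Y), p (t3 x1 v u) = p (t3 x2 v u)) -> x1 = x2).
Proof.
  assert (Htri : trimorph (fun x y z => laX (pr x y) z)).
  { split; [|split].
    - intros y z S. cbv beta. assert (E := proj1 Hpr y S); cbv beta in E; rewrite E.
      apply (sp_img (fun a => laX a z)). apply (proj1 HlaX).
    - intros x z S. cbv beta. assert (E := proj2 Hpr x S); cbv beta in E; rewrite E.
      apply (sp_img (fun a => laX a z)). apply (proj1 HlaX).
    - intros x y. apply (proj2 HlaX). }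
  destruct (proj2 HXYX X _ Htri) as [p [psp [pt _]]].
  exists p. split; [exact psp|]. split; [|split; [exact pt|split]].
  - intros x. destruct (Hless x) as [S [HS Ex]].
    set (K := fun k => sl_le (p (elem3 t3 k)) x).
    exists (sl_sup (img (elem3 t3) K)). rewrite (sp_img p); auto.
    apply antisym.
    + apply img_least. intros k Hk; exact Hk.
    + apply le_trans with (y := sl_sup S); [rewrite <- Ex; apply le_refl|].
      apply sup_least. intros z Hz.
      assert (Hzx : sl_le z x) by (rewrite Ex; apply sup_ub; exact Hz).
      destruct (HS z Hz) as [a [n ->]]. destruct (fwd_la a n) as [K' E']. rewrite E'.
      apply img_least. intros [x' y'] Hk. simpl.
      rewrite <- pt. change (p (t3 x' y' n)) with (p (elem3 t3 (x', y', n))).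
      apply (img_ub (fun k => p (elem3 t3 k)) K (x', y', n)).
      unfold K, elem3; simpl. rewrite pt. eapply le_trans; [|exact Hzx].
      rewrite E'. apply (img_ub (fun k => laX (pr (fst k) (snd k)) n) K' (x', y')). exact Hk.
  - intros x1 x2 H. apply Hlsep. intros a.

    destruct (gen_surj2 _ _ _ _ _ hA HXY hAsp hAs a) as [K' ->].
    rewrite !(sp_img (fun a => laX a _)) by apply (proj1 HlaX).
    apply sup_img_ext; intros k _; unfold elem2; rewrite hAt, <- !pt; auto.
  - intros x1 x2 H. apply Hrsep. intros b.
    destruct (gen_surj2 _ _ _ _ _ hB HYX hBsp hBs b) as [K' ->].
    rewrite !(sp_img (raX _)) by apply (proj2 HraX).
    apply sup_img_ext; intros k _; unfold elem2; rewrite hBt, <- !Hid, <- !pt; auto.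
Qed.
End Fwd.

Record Hyps (X Y : SupLattice) (P3 : X -> Y -> X -> X) (Q3 : Y -> X -> Y -> Y) : Prop := {
  hP : trimorph P3; hQ : trimorph Q3;
  c1a : forall x1 y1 x2 y2 x3, P3 (P3 x1 y1 x2) y2 x3 = P3 x1 (Q3 y1 x2 y2) x3;
  c1b : forall x1 y1 x2 y2 x3, P3 x1 (Q3 y1 x2 y2) x3 = P3 x1 y1 (P3 x2 y2 x3);
  c2a : forall y1 x1 y2 x2 y3, Q3 (Q3 y1 x1 y2) x2 y3 = Q3 y1 (P3 x1 y2 x2) y3;
  c2b : forall y1 x1 y2 x2 y3, Q3 y1 (P3 x1 y2 x2) y3 = Q3 y1 x1 (Q3 y2 x2 y3);
  c3 : forall x1 x2, (forall u v, P3 u v x1 = P3 u v x2) -> x1 = x2;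
  c4 : forall x1 x2, (forall u v, P3 x1 v u = P3 x2 v u) -> x1 = x2;
  c5 : forall y1 y2, (forall v u, Q3 v u y1 = Q3 v u y2) -> y1 = y2;
  c6 : forall y1 y2, (forall u v, Q3 y1 u v = Q3 y2 u v) -> y1 = y2;
  gX : forall x, exists K : X * Y * X -> Prop,
      x = sl_sup (img (fun k => P3 (fst (fst k)) (snd (fst k)) (snd k)) K);
  gY : forall y, exists K : Y * X * Y -> Prop,
      y = sl_sup (img (fun k => Q3 (fst (fst k)) (snd (fst k)) (snd k)) K) }.

Arguments hP {X Y P3 Q3}. Arguments hQ {X Y P3 Q3}.
Arguments c1a {X Y P3 Q3}. Arguments c1b {X Y P3 Q3}.
Arguments c2a {X Y P3 Q3}. Arguments c2b {X Y P3 Q3}.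
Arguments c3 {X Y P3 Q3}. Arguments c4 {X Y P3 Q3}.
Arguments c5 {X Y P3 Q3}. Arguments c6 {X Y P3 Q3}.
Arguments gX {X Y P3 Q3}. Arguments gY {X Y P3 Q3}.

Lemma img_img {I J} {L : SupLattice} (f : J -> L) (g : I -> J) S :
  sl_sup (img f (img g S)) = sl_sup (img (fun i => f (g i)) S).
Proof.
  apply sup_ext; intros z; split.
  - intros [j [[i [Hi ->]] ->]]; exists i; auto.
  - intros [i [Hi ->]]; exists (g i); split; auto; exists i; auto.
Qed.

Lemma sup_img_single {I} {L : SupLattice} (f : I -> L) i :
  sl_sup (img f (fun k => k = i)) = f i.
Proof.
  apply antisym; [apply img_least; intros; subst; apply le_refl| apply img_ub; auto].
Qed.

Section Conv.
Context (X Y : SupLattice) (P3 : X -> Y -> X -> X) (Q3 : Y -> X -> Y -> Y)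
  (H : Hyps X Y P3 Q3).

Definition rep (f : X -> X) (g : Y -> Y) (S : X * Y -> Prop) : Prop :=
  (forall z, f z = sl_sup (img (fun k => P3 (fst k) (snd k) z) S)) /\
  (forall v, g v = sl_sup (img (fun k => Q3 v (fst k) (snd k)) S)).

Definition Acar := {fg : (X -> X) * (Y -> Y) | exists S, rep (fst fg) (snd fg) S}.
Definition a1 (a : Acar) : X -> X := fst (proj1_sig a).
Definition a2 (a : Acar) : Y -> Y := snd (proj1_sig a).
Lemma rep_of (a : Acar) : exists S, rep (a1 a) (a2 a) S.
Proof. exact (proj2_sig a). Qed.

Lemma Aext (a b : Acar) : (forall z, a1 a z = a1 b z) -> (forall v, a2 a v = a2 b v) -> a = b.
Proof.
  intros H1 H2. apply sig_eq. destruct a as [[f g] Ha], b as [[f' g'] Hb].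
  unfold a1, a2 in *; simpl in *. f_equal; apply functional_extensionality; auto.
Qed.

Lemma P3_1 (y : Y) (z : X) {I} (g : I -> X) S :
  P3 (sl_sup (img g S)) y z = sl_sup (img (fun i => P3 (g i) y z) S).
Proof. apply (sp_img (fun x => P3 x y z)). apply (proj1 (hP H)). Qed.
Lemma P3_2 (x : X) (z : X) {I} (g : I -> Y) S :
  P3 x (sl_sup (img g S)) z = sl_sup (img (fun i => P3 x (g i) z) S).
Proof. apply (sp_img (fun y => P3 x y z)). apply (proj1 (proj2 (hP H))). Qed.
Lemma P3_3 (x : X) (y : Y) {I} (g : I -> X) S :
  P3 x y (sl_sup (img g S)) = sl_sup (img (fun i => P3 x y (g i)) S).
Proof. apply (sp_img (P3 x y)). apply (proj2 (proj2 (hP H))). Qed.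
Lemma Q3_1 (y : X) (z : Y) {I} (g : I -> Y) S :
  Q3 (sl_sup (img g S)) y z = sl_sup (img (fun i => Q3 (g i) y z) S).
Proof. apply (sp_img (fun x => Q3 x y z)). apply (proj1 (hQ H)). Qed.
Lemma Q3_2 (x : Y) (z : Y) {I} (g : I -> X) S :
  Q3 x (sl_sup (img g S)) z = sl_sup (img (fun i => Q3 x (g i) z) S).
Proof. apply (sp_img (fun y => Q3 x y z)). apply (proj1 (proj2 (hQ H))). Qed.
Lemma Q3_3 (x : Y) (y : X) {I} (g : I -> Y) S :
  Q3 x y (sl_sup (img g S)) = sl_sup (img (fun i => Q3 x y (g i)) S).
Proof. apply (sp_img (Q3 x y)). apply (proj2 (proj2 (hQ H))). Qed.

Lemma a1_sp (a : Acar) : sup_pres (a1 a).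
Proof.
  intros T. destruct (rep_of a) as [S [Hf Hg]]. rewrite Hf.
  etransitivity. { apply sup_img_ext; intros k _. apply (proj2 (proj2 (hP H))). }
  etransitivity. { apply (sup_comm (fun k t => P3 (fst k) (snd k) t)). }
  apply sup_img_ext; intros t _. symmetry; apply Hf.
Qed.

Lemma a2_sp (a : Acar) : sup_pres (a2 a).
Proof.
  intros T. destruct (rep_of a) as [S [Hf Hg]]. rewrite Hg.
  etransitivity. { apply sup_img_ext; intros k _. apply (proj1 (hQ H) (fst k) (snd k)). }
  etransitivity. { apply (sup_comm (fun k t => Q3 t (fst k) (snd k))). }
  apply sup_img_ext; intros t _. symmetry; apply Hg.
Qed.

Lemma E1 (a : Acar) x y z : a1 a (P3 x y z) = P3 (a1 a x) y z.
Proof.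
  destruct (rep_of a) as [S [Hf Hg]]. rewrite (Hf (P3 x y z)), (Hf x), P3_1.
  apply sup_img_ext; intros k _. rewrite (c1a H), (c1b H). reflexivity.
Qed.

Lemma E2 (a : Acar) x y z : P3 x (a2 a y) z = P3 x y (a1 a z).
Proof.
  destruct (rep_of a) as [S [Hf Hg]]. rewrite (Hg y), (Hf z), P3_2, P3_3.
  apply sup_img_ext; intros k _. apply (c1b H).
Qed.

Lemma E3 (a : Acar) v x y : Q3 v (a1 a x) y = Q3 (a2 a v) x y.
Proof.
  destruct (rep_of a) as [S [Hf Hg]]. rewrite (Hf x), (Hg v), Q3_2, Q3_1.
  apply sup_img_ext; intros k _. symmetry; apply (c2a H).
Qed.

Lemma E4 (a : Acar) v x y : Q3 v x (a2 a y) = a2 a (Q3 v x y).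
Proof.
  destruct (rep_of a) as [S [Hf Hg]]. rewrite (Hg y), (Hg (Q3 v x y)), Q3_3.
  apply sup_img_ext; intros k _. rewrite (c2a H), (c2b H). reflexivity.
Qed.

Lemma supA_pf (F : Acar -> Prop) : exists S,
  rep (fun z => sl_sup (img (fun a => a1 a z) F)) (fun v => sl_sup (img (fun a => a2 a v) F)) S.
Proof.
  exists (fun k => exists a, F a /\ exists S, rep (a1 a) (a2 a) S /\ S k).
  split; intros z; apply antisym.
  - apply img_least; intros a Fa. destruct (rep_of a) as [S [Hf Hg]]. rewrite (Hf z).
    apply img_least; intros k Hk.
    apply (img_ub (fun k => P3 (fst k) (snd k) z)). exists a; split; auto. exists S; split; auto. split; auto.
  - apply img_least; intros k [a [Fa [S [[Hf Hg] Hk]]]].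
    apply le_trans with (y := a1 a z); [rewrite (Hf z); apply (img_ub (fun k => P3 (fst k) (snd k) z)); auto|].
    apply (img_ub (fun a => a1 a z)); auto.
  - apply img_least; intros a Fa. destruct (rep_of a) as [S [Hf Hg]]. rewrite (Hg z).
    apply img_least; intros k Hk.
    apply (img_ub (fun k => Q3 z (fst k) (snd k))). exists a; split; auto. exists S; split; auto. split; auto.
  - apply img_least; intros k [a [Fa [S [[Hf Hg] Hk]]]].
    apply le_trans with (y := a2 a z); [rewrite (Hg z); apply (img_ub (fun k => Q3 z (fst k) (snd k))); auto|].
    apply (img_ub (fun a => a2 a z)); auto.
Qed.

Definition supA (F : Acar -> Prop) : Acar :=
  exist _ (fun z => sl_sup (img (fun a => a1 a z) F), fun v => sl_sup (img (fun a => a2 a v) F))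
    (supA_pf F).

Lemma LA_pf x y : exists S, rep (P3 x y) (fun v => Q3 v x y) S.
Proof.
  exists (fun k => k = (x, y)). split; intros z; symmetry.
  - apply (sup_img_single (fun k => P3 (fst k) (snd k) z)).
  - apply (sup_img_single (fun k => Q3 z (fst k) (snd k))).
Qed.

Definition LA x y : Acar := exist _ (P3 x y, fun v => Q3 v x y) (LA_pf x y).

Lemma mulA_pf (a b : Acar) : exists S,
  rep (fun z => a1 a (a1 b z)) (fun v => a2 b (a2 a v)) S.
Proof.
  destruct (rep_of b) as [S [Hf Hg]].
  exists (img (fun k => (a1 a (fst k), snd k)) S). split; intros z; rewrite img_img.
  - rewrite (Hf z), (sp_img (a1 a)) by apply a1_sp.
    apply sup_img_ext; intros k _. apply E1.
  - rewrite (Hg (a2 a z)). apply sup_img_ext; intros k _. symmetry; apply E3.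
Qed.

Definition mulA (a b : Acar) : Acar :=
  exist _ (fun z => a1 a (a1 b z), fun v => a2 b (a2 a v)) (mulA_pf a b).

Lemma a1_mul a b z : a1 (mulA a b) z = a1 a (a1 b z). Proof. reflexivity. Qed.
Lemma a2_mul a b v : a2 (mulA a b) v = a2 b (a2 a v). Proof. reflexivity. Qed.
Lemma a1_sup F z : a1 (supA F) z = sl_sup (img (fun a => a1 a z) F). Proof. reflexivity. Qed.
Lemma a2_sup F v : a2 (supA F) v = sl_sup (img (fun a => a2 a v) F). Proof. reflexivity. Qed.
Lemma a1_LA x y z : a1 (LA x y) z = P3 x y z. Proof. reflexivity. Qed.
Lemma a2_LA x y v : a2 (LA x y) v = Q3 v x y. Proof. reflexivity. Qed.

Definition leA (a b : Acar) : Prop :=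
  (forall z, sl_le (a1 a z) (a1 b z)) /\ (forall v, sl_le (a2 a v) (a2 b v)).

Definition Asl : SupLattice.
Proof.
  refine {| sl_car := Acar; sl_le := leA; sl_sup := supA |}.
  - intros a; split; intros; apply le_refl.
  - intros a b c [H1 H2] [H3 H4]; split; intros; eapply le_trans; eauto.
  - intros a b [H1 H2] [H3 H4]; apply Aext; intros; apply antisym; auto.
  - intros S a Sa; split; intros z; apply (img_ub (fun a => _ a z)); auto.
  - intros S b Hb; split; intros z; apply img_least; intros a Sa; apply Hb; auto.
Defined.

Definition Aq : Quantale.
Proof.
  refine {| q_sl := Asl; q_mul := mulA |}.
  - intros a b c; apply Aext; intros; reflexivity.
  - split.
    + intros b F; apply Aext; intros z; simpl; rewrite ?a1_mul, ?a2_mul, ?a1_sup, ?a2_sup, img_img.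
      * apply sup_img_ext; intros; apply a1_mul.
      * rewrite (sp_img (a2 b)) by apply a2_sp. apply sup_img_ext; intros; symmetry; apply a2_mul.
    + intros a F; apply Aext; intros z; simpl; rewrite ?a1_mul, ?a2_mul, ?a1_sup, ?a2_sup, img_img.
      * rewrite (sp_img (a1 a)) by apply a1_sp. apply sup_img_ext; intros; symmetry; apply a1_mul.
      * apply sup_img_ext; intros; apply a2_mul.
Defined.

Lemma LA_bimorph : bimorph (Z := Asl) LA.
Proof.
  split.
  - intros y S; apply Aext; intros z; simpl; rewrite ?a1_LA, ?a2_LA, ?a1_sup, ?a2_sup, img_img.
    + apply (proj1 (hP H) y z S).
    + apply (proj1 (proj2 (hQ H)) z y S).
  - intros x S; apply Aext; intros z; simpl; rewrite ?a1_LA, ?a2_LA, ?a1_sup, ?a2_sup, img_img.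
    + apply (proj1 (proj2 (hP H)) x z S).
    + apply (proj2 (proj2 (hQ H)) z x S).
Qed.

Lemma LA_mul_l (a : Acar) x y : LA (a1 a x) y = mulA a (LA x y).
Proof. apply Aext; intros z; simpl; rewrite ?a1_LA, ?a2_LA, ?a1_mul, ?a2_mul, ?a1_LA, ?a2_LA.
  - symmetry; apply E1.
  - apply E3. Qed.

Lemma LA_mul_r (a : Acar) x y : LA x (a2 a y) = mulA (LA x y) a.
Proof. apply Aext; intros z; simpl; rewrite ?a1_LA, ?a2_LA, ?a1_mul, ?a2_mul, ?a1_LA, ?a2_LA.
  - apply E2.
  - apply E4. Qed.

Lemma LA_mul x y z w : mulA (LA x y) (LA z w) = LA (P3 x y z) w.
Proof. rewrite <- LA_mul_l. reflexivity. Qed.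

Lemma rep_sup (a : Acar) : exists S, a = @sl_sup Asl (img (fun k => LA (fst k) (snd k)) S) /\
  forall k, S k -> leA (LA (fst k) (snd k)) a.
Proof.
  destruct (rep_of a) as [S [Hf Hg]]. exists S. split.
  - apply Aext; intros z; simpl; rewrite ?a1_sup, ?a2_sup, img_img.
    + rewrite Hf. reflexivity.
    + rewrite Hg. reflexivity.
  - intros k Hk; split; intros z; rewrite ?a1_LA, ?a2_LA.
    + rewrite (Hf z). apply (img_ub (fun k => P3 (fst k) (snd k) z)); auto.
    + rewrite (Hg z). apply (img_ub (fun k => Q3 z (fst k) (snd k))); auto.
Qed.

Lemma genLA x y : exists K : X * Y * X -> Prop,
  LA x y = @sl_sup Asl (img (fun k => mulA (LA (fst (fst k)) (snd (fst k))) (LA (snd k) y)) K).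
Proof.
  destruct (gX H x) as [K ->]. exists K.
  rewrite (sp_img (L2 := Asl) (fun x => LA x y)) by apply (proj1 LA_bimorph).
  apply (sup_img_ext (L := Asl)); intros; symmetry; apply LA_mul.
Qed.

Lemma essA (m : Acar) :
  m = @sl_sup Asl (fun e => (exists a n, e = mulA a n) /\ leA e m).
Proof.
  apply (@antisym Asl).
  - destruct (rep_sup m) as [S [Em Hle]].
    apply (@le_trans Asl) with (y := @sl_sup Asl (img (fun k => LA (fst k) (snd k)) S));
      [rewrite <- Em; apply (@le_refl Asl)|].
    apply (img_least (L := Asl)); intros k Sk. destruct (genLA (fst k) (snd k)) as [K EK].
    rewrite EK. apply (img_least (L := Asl)); intros k' Hk'. apply (sup_ub (L := Asl)). split; [eexists; eexists; reflexivity|].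
    apply (@le_trans Asl) with (y := LA (fst k) (snd k)); [|apply Hle; auto].
    rewrite EK. apply (img_ub (L := Asl) (fun k => mulA (LA (fst (fst k)) (snd (fst k))) (LA (snd k) (snd _)))). auto.
  - apply (sup_least (L := Asl)). intros e [_ He]; exact He.
Qed.

Lemma mregQ : mreg_quantale Aq.
Proof.
  split; [|split].
  - split; [split; [intros; apply Aext; reflexivity| apply (q_bimorph Aq)]|split].
    + intros m. eexists; split; [|apply essA]. intros z [[a [n ->]] _]. exists a, n; reflexivity.
    + intros m n Hmn. apply Aext.
      * intros z. apply (c3 H); intros u v. specialize (Hmn (LA u v)).
        apply (f_equal (fun c => a1 c z)) in Hmn; exact Hmn.
      * intros v. destruct (gY H v) as [K ->].
        rewrite !(sp_img (a2 _)) by apply a2_sp.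
        apply sup_img_ext; intros k _.
        specialize (Hmn (LA (snd (fst k)) (snd k))).
        apply (f_equal (fun c => a2 c (fst (fst k)))) in Hmn. exact Hmn.
  - split; [split; [intros; apply Aext; reflexivity| apply (q_bimorph Aq)]|split].
    + intros m. eexists; split; [|apply essA]. intros z [[a [n ->]] _]. exists a, n; reflexivity.
    + intros m n Hmn. apply Aext.
      * intros z. destruct (gX H z) as [K ->].
        rewrite !(sp_img (a1 _)) by apply a1_sp.
        apply sup_img_ext; intros k _.
        specialize (Hmn (LA (fst (fst k)) (snd (fst k)))).
        apply (f_equal (fun c => a1 c (snd k))) in Hmn. exact Hmn.
      * intros v. apply (c6 H); intros u w. specialize (Hmn (LA u w)).
        apply (f_equal (fun c => a2 c v)) in Hmn. exact Hmn.
  - intros; apply Aext; reflexivity.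
Qed.

Lemma lmodX : mreg_lmod Aq X a1.
Proof.
  split; [split; [intros; reflexivity| split; [intros x F; reflexivity| apply a1_sp]]|split].
  - intros x. exists (fun e => (exists (a : Aq) n, e = a1 a n) /\ sl_le e x). split.
    + intros z [Hz _]; exact Hz.
    + destruct (gX H x) as [K EK].
      assert (Hle : forall k, K k -> sl_le (P3 (fst (fst k)) (snd (fst k)) (snd k)) x).
      { intros k Hk. rewrite EK. apply (img_ub (fun k => P3 (fst (fst k)) (snd (fst k)) (snd k))). auto. }
      apply antisym.
      * apply le_trans with (y := sl_sup (img (fun k => P3 (fst (fst k)) (snd (fst k)) (snd k)) K));
          [rewrite <- EK; apply le_refl|].
        apply img_least; intros k Hk. apply sup_ub. split; auto.
        exists (LA (fst (fst k)) (snd (fst k))), (snd k). reflexivity.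
      * apply sup_least; intros e [_ He]; exact He.
  - intros m n Hmn. apply (c3 H); intros u v. apply (Hmn (LA u v)).
Qed.

Lemma rmodY : mreg_rmod Aq Y (fun y a => a2 a y).
Proof.
  split; [split; [intros; reflexivity| split; [intros a; apply a2_sp| intros y F; reflexivity]]|split].
  - intros y. exists (fun e => (exists n (a : Aq), e = a2 a n) /\ sl_le e y). split.
    + intros z [Hz _]; exact Hz.
    + destruct (gY H y) as [K EK].
      assert (Hle : forall k, K k -> sl_le (Q3 (fst (fst k)) (snd (fst k)) (snd k)) y).
      { intros k Hk. rewrite EK. apply (img_ub (fun k => Q3 (fst (fst k)) (snd (fst k)) (snd k))). auto. }
      apply antisym.
      * apply le_trans with (y := sl_sup (img (fun k => Q3 (fst (fst k)) (snd (fst k)) (snd k)) K));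
          [rewrite <- EK; apply le_refl|].
        apply img_least; intros k Hk. apply sup_ub. split; auto.
        exists (fst (fst k)), (LA (snd (fst k)) (snd k)). reflexivity.
      * apply sup_least; intros e [_ He]; exact He.
  - intros m n Hmn. apply (c6 H); intros u v. apply (Hmn (LA u v)).
Qed.

Lemma surjA (TXY : SupLattice) (t2 : X -> Y -> TXY) : is_tensor2 X Y TXY t2 ->
  exists h : TXY -> Aq, sup_pres h /\ (forall x y, h (t2 x y) = LA x y) /\ surj h.
Proof.
  intros HT. destruct (proj2 HT Asl LA LA_bimorph) as [h [hsp [ht _]]].
  exists h; split; auto; split; auto. intros a.
  destruct (rep_sup a) as [S [Ea _]].
  exists (sl_sup (img (fun k => t2 (fst k) (snd k)) S)).
  rewrite (sp_img h) by auto. rewrite Ea. apply (sup_img_ext (L := Asl)); intros; apply ht.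
Qed.

End Conv.

Section Mixed.
Context (X Y : SupLattice) (P3 : X -> Y -> X -> X) (Q3 : Y -> X -> Y -> Y)
  (H : Hyps X Y P3 Q3) (H' : Hyps Y X Q3 P3).

Lemma commuteAB (a : Aq X Y P3 Q3 H) (b : Aq Y X Q3 P3 H') m :
  a2 Y X Q3 P3 b (a1 X Y P3 Q3 a m) = a1 X Y P3 Q3 a (a2 Y X Q3 P3 b m).
Proof.
  destruct (gX H m) as [K ->].
  rewrite (sp_img (a1 X Y P3 Q3 a)) by apply (a1_sp X Y P3 Q3 H).
  rewrite !(sp_img (a2 Y X Q3 P3 b)) by apply (a2_sp Y X Q3 P3 H').
  rewrite (sp_img (a1 X Y P3 Q3 a)) by apply (a1_sp X Y P3 Q3 H).
  apply sup_img_ext; intros k _.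
  rewrite (E1 X Y P3 Q3 H), <- (E4 Y X Q3 P3 H'), <- (E4 Y X Q3 P3 H'), (E1 X Y P3 Q3 H).
  reflexivity.
Qed.

Lemma mixed3 (a : Aq X Y P3 Q3 H) y x :
  LA Y X Q3 P3 (a2 X Y P3 Q3 a y) x = LA Y X Q3 P3 y (a1 X Y P3 Q3 a x).
Proof.
  apply Aext; intros z; rewrite ?a1_LA, ?a2_LA.
  - symmetry; apply (E3 X Y P3 Q3 H).
  - apply (E2 X Y P3 Q3 H).
Qed.

Lemma mbimod : mreg_bimod (Aq X Y P3 Q3 H) (Aq Y X Q3 P3 H') X (a1 X Y P3 Q3)
  (fun x b => a2 Y X Q3 P3 b x).
Proof.
  split; [apply lmodX|split; [apply (rmodY Y X Q3 P3 H')|]].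
  intros a m b. apply commuteAB.
Qed.
End Mixed.

Lemma sp_comp {L1 L2 L3 : SupLattice} (p : L2 -> L3) (g : L1 -> L2) :
  sup_pres p -> sup_pres g -> sup_pres (fun x => p (g x)).
Proof. intros Hp Hg S. rewrite Hg. apply sp_img; auto. Qed.

Theorem theorem1 (X Y : SupLattice)
    (TXY : SupLattice) (t2 : X -> Y -> TXY) (HXY : is_tensor2 X Y TXY t2)
    (TYX : SupLattice) (s2 : Y -> X -> TYX) (HYX : is_tensor2 Y X TYX s2)
    (TXYX : SupLattice) (t3 : X -> Y -> X -> TXYX) (HXYX : is_tensor3 X Y X TXYX t3)
    (TYXY : SupLattice) (s3 : Y -> X -> Y -> TYXY) (HYXY : is_tensor3 Y X Y TYXY s3) :
  morita_pair X Y TXY t2 TYX s2 <->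
  exists (p : TXYX -> X) (q : TYXY -> Y),
    sup_pres p /\ surj p /\ sup_pres q /\ surj q /\
    (forall (x1 x2 x3 : X) (y1 y2 : Y),
        p (t3 (p (t3 x1 y1 x2)) y2 x3) = p (t3 x1 (q (s3 y1 x2 y2)) x3) /\
        p (t3 x1 (q (s3 y1 x2 y2)) x3) = p (t3 x1 y1 (p (t3 x2 y2 x3)))) /\
    (forall (x1 x2 : X) (y1 y2 y3 : Y),
        q (s3 (q (s3 y1 x1 y2)) x2 y3) = q (s3 y1 (p (t3 x1 y2 x2)) y3) /\
        q (s3 y1 (p (t3 x1 y2 x2)) y3) = q (s3 y1 x1 (q (s3 y2 x2 y3)))) /\
    (forall x1 x2 : X, (forall (u : X) (v : Y), p (t3 u v x1) = p (t3 u v x2)) -> x1 = x2) /\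
    (forall x1 x2 : X, (forall (u : X) (v : Y), p (t3 x1 v u) = p (t3 x2 v u)) -> x1 = x2) /\
    (forall y1 y2 : Y, (forall (v : Y) (u : X), q (s3 v u y1) = q (s3 v u y2)) -> y1 = y2) /\
    (forall y1 y2 : Y, (forall (u : X) (v : Y), q (s3 y1 u v) = q (s3 y2 u v)) -> y1 = y2).
Proof.
  split.
  - intros [A [B [laX [raX [laY [raY [pr [br Hc]]]]]]]].
    destruct Hc as [mA [mB [bX [bY [bpr [bbr [prl [prr [brl [brr [m1 [m2 [m3 [m4 [HA HB]]]]]]]]]]]]]]].
    destruct bX as [[[lXa lXb] [lXe lXs]] [[[rXa rXb] [rXe rXs]] cX]].
    destruct bY as [[[lYa lYb] [lYe lYs]] [[[rYa rYb] [rYe rYs]] cY]].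
    destruct HA as [hA [hAsp [hAt hAs]]]. destruct HB as [hB [hBsp [hBt hBs]]].
    destruct (fwd_main A B X Y laX raX pr br TXY t2 HXY TYX s2 HYX TXYX t3 HXYX
      lXb rXb bpr lXe lXs rXs m3 hA hAsp hAt hAs hB hBsp hBt hBs)
      as [p [psp [ps [pt [p3 p4]]]]].
    destruct (fwd_main B A Y X laY raY br pr TYX s2 HYX TXY t2 HXY TYXY s3 HYXY
      lYb rYb bbr lYe lYs rYs m4 hB hBsp hBt hBs hA hAsp hAt hAs)
      as [q [qsp [qs [qt [q3 q4]]]]].
    exists p, q. split; [auto|split; [auto|split; [auto|split; [auto|]]]].
    split; [|split; [|split; [exact p3|split; [exact p4|split; [exact q3|]]]]].
    + intros x1 x2 x3 y1 y2. rewrite !pt, !qt. split.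
      * rewrite prl, m4, prr. reflexivity.
      * rewrite m4, prr, lXa. reflexivity.
    + intros x1 x2 y1 y2 y3. rewrite !pt, !qt. split.
      * rewrite brl, m3, brr. reflexivity.
      * rewrite m3, brr, lYa. reflexivity.
    + intros y1 y2 Hy. apply q4. intros u v. apply Hy.
  - intros [p [q [psp [ps [qsp [qs [C1 [C2 [C3 [C4 [C5 C6]]]]]]]]]]].
    set (P3 := fun x y z => p (t3 x y z)).
    set (Q3 := fun v x y => q (s3 v x y)).
    destruct (proj1 HXYX) as [t3a [t3b t3c]]. destruct (proj1 HYXY) as [s3a [s3b s3c]].
    assert (hP3 : trimorph P3).
    { unfold P3, Q3; split; [|split]; intros; apply sp_comp; auto. }
    assert (hQ3 : trimorph Q3).
    { unfold P3, Q3; split; [|split]; intros; apply sp_comp; auto. }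
    assert (gX3 : forall x, exists K : X * Y * X -> Prop,
      x = sl_sup (img (fun k => P3 (fst (fst k)) (snd (fst k)) (snd k)) K)).
    { intros x. apply (gen_surj3 _ _ _ _ t3 _ p); auto. }
    assert (gY3 : forall y, exists K : Y * X * Y -> Prop,
      y = sl_sup (img (fun k => Q3 (fst (fst k)) (snd (fst k)) (snd k)) K)).
    { intros y. apply (gen_surj3 _ _ _ _ s3 _ q); auto. }
    assert (H : Hyps X Y P3 Q3).
    { apply Build_Hyps; auto.
      - intros; apply C1.
      - intros; apply C1.
      - intros; apply C2.
      - intros; apply C2. }
    assert (H' : Hyps Y X Q3 P3).
    { apply Build_Hyps; auto.
      - intros; apply C2.
      - intros; apply C2.
      - intros; apply C1.
      - intros; apply C1.
      - intros y1 y2 Hy; apply C6; intros u v; apply Hy.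
      - intros x1 x2 Hx; apply C4; intros u v; apply Hx. }
    destruct (surjA X Y P3 Q3 H TXY t2 HXY) as [hA [hAsp [hAt hAs]]].
    destruct (surjA Y X Q3 P3 H' TYX s2 HYX) as [hB [hBsp [hBt hBs]]].
    exists (Aq X Y P3 Q3 H), (Aq Y X Q3 P3 H'), (a1 X Y P3 Q3), (fun x b => a2 Y X Q3 P3 b x),
      (a1 Y X Q3 P3), (fun y a => a2 X Y P3 Q3 a y), (LA X Y P3 Q3), (LA Y X Q3 P3).
    split; [apply (mregQ X Y P3 Q3 H)|split; [apply (mregQ Y X Q3 P3 H')|]].
    split; [apply (mbimod X Y P3 Q3 H H')|split; [apply (mbimod Y X Q3 P3 H' H)|]].
    split; [apply (LA_bimorph X Y P3 Q3 H)|split; [apply (LA_bimorph Y X Q3 P3 H')|]].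
    split; [intros; apply (LA_mul_l X Y P3 Q3 H)|split; [intros; apply (LA_mul_r X Y P3 Q3 H)|]].
    split; [intros; apply (LA_mul_l Y X Q3 P3 H')|split; [intros; apply (LA_mul_r Y X Q3 P3 H')|]].
    split; [intros; apply (mixed3 Y X Q3 P3 H')|].
    split; [intros; apply (mixed3 X Y P3 Q3 H)|].
    split; [intros; reflexivity|split; [intros; reflexivity|]].
    split; [exists hA; auto|exists hB; auto].
Qed.
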